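(* Let $\Gamma$ be a finitely generated stable LEF group, $\pi:\mathbb{F}\twoheadrightarrow\Gamma$ an epimorphism from a free group on a finite basis $X$, $S=\pi(X)$, and suppose there exists $C\ge1$ such that $F_\Gamma^\pi(x)\le Cx^C$ for all $x\ge1$. Then there exists $C'>0$ such that for every positive integer $l$, $\mathcal{L}_\Gamma^S(C'l^C)!\ge\mathcal{R}_\Gamma^S(l)$.
   Context: For finite $\Omega$, $d_\Omega(\sigma,\tau)=|\{\omega:\sigma(\omega)\ne\tau(\omega)\}|/|\Omega|$. A pair $(\delta,E)$, $\delta\in(0,1]$, $E\subseteq\ker\pi$ finite, is valid for $\epsilon>0$ if for every finite $\Omega$ and homomorphism $\rho:\mathbb{F}\to\mathrm{Sym}(\Omega)$ with $d_\Omega(\rho(r),\mathrm{id})<\delta$ for all $r\in E$ there is a homomorphism $\phi:\Gamma\to\mathrm{Sym}(\Omega)$ with $d_\Omega(\rho(x),\phi(\pi(x)))<\epsilon$ for all $x\in X$; $\Gamma$ is stable if valid pairs exist for all $\epsilon$. $F_\Gamma^\pi(x)=\inf\{\|E\|/\delta:(\delta,E)\text{ valid for }1/x\}$, $\|E\|=\sum_{r\in E}|r|$. $B_S(t)$ is the ball of radius $t$ in the word metric of $S$. A local embedding of $A\subseteq\Gamma$ into a group $\Delta$ is an injective map $\psi$ with $\psi(gh)=\psi(g)\psi(h)$ whenever $g,h,gh\in A$; $\Gamma$ is LEF if every finite subset locally embeds in a finite group. $\mathcal{L}_\Gamma^S(t)$ is the minimal order of a finite group admitting a local embedding of $B_S(t)$;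 $\mathcal{R}_\Gamma^S(l)$ is the minimal order of a finite group $\Delta$ with a homomorphism $\Gamma\to\Delta$ injective on $B_S(l)$. *)

(* Defs.v *)
From HB Require Import structures.
From mathcomp Require Import all_boot all_order all_algebra all_fingroup.
From mathcomp Require Import all_classical all_reals all_analysis.

Set Implicit Arguments.
Unset Strict Implicit.
Unset Printing Implicit Defensive.

Import Order.TTheory GRing.Theory Num.Theory.

(* A letter is (x, b) with b = true meaning x^{-1}.  Elements of F are *)
(* the freely reduced words.                                           *)
Definition letter (k : nat) := ('I_k * bool)%type.

Definition reduced_word (k : nat) (w : seq (letter k)) : bool :=
  sorted (fun a b : letter k => ~~ ((a.1 == b.1) && (a.2 != b.2))) w.

Definition word_len (k : nat) (w : seq (letter k)) : nat := size w.

Definition eval_word (k : nat) (G : groupType) (s : 'I_k -> G)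
  (w : seq (letter k)) : G :=
  foldr (fun a acc => ((if a.2 then (s a.1)^-1 else s a.1) * acc)%g) 1%g w.

(* pi : F ->> Gamma given by s = pi restricted to X; surjectivity *)
Definition epi_from_free (k : nat) (G : groupType) (s : 'I_k -> G) : Prop :=
  forall g : G, exists w : seq (letter k), eval_word s w = g.

Definition in_ker (k : nat) (G : groupType) (s : 'I_k -> G)
  (r : seq (letter k)) : Prop :=
  reduced_word r /\ eval_word s r = 1%g.

Definition hdist (R : realType) (Om : finType) (sig tau : {perm Om}) : R :=
  (#|[set w | sig w != tau w]|%:R / #|Om|%:R)%R.
Arguments hdist {R Om}.

Definition is_hom (G H : groupType) (f : G -> H) : Prop :=
  forall g h : G, f (g * h)%g = (f g * f h)%g.

Definition Enorm (k : nat) (E : seq (seq (letter k))) : nat :=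
  sumn (map (@word_len k) E).

(* (delta, E) is valid for eps. E is a finite subset of ker pi
   (a duplicate-free list of reduced words in the kernel).  A
   homomorphism rho : F -> Sym(Omega) is given by its values on X. *)
Definition valid_pair (R : realType) (k : nat) (G : groupType)
  (s : 'I_k -> G) (delta : R) (E : seq (seq (letter k))) (eps : R) : Prop :=
  [/\ (0 < delta)%R, (delta <= 1)%R, uniq E, (forall r, r \in E -> in_ker s r) &
   forall (Om : finType) (rho : 'I_k -> {perm Om}),
     (forall r, r \in E -> (hdist (eval_word rho r) 1%g < delta)%R) ->
     exists phi : G -> {perm Om},
       is_hom phi /\ forall x : 'I_k, (hdist (rho x) (phi (s x)) < eps)%R].

Definition stable (R : realType) (k : nat) (G : groupType) (s : 'I_k -> G)
  : Prop :=
  forall eps : R, (0 < eps)%R -> exists delta E, valid_pair s delta E eps.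

(* F_Gamma^pi(x), an extended real (+oo if no valid pair exists) *)
Definition stab_fun (R : realType) (k : nat) (G : groupType)
  (s : 'I_k -> G) (x : R) : \bar R :=
  ereal_inf [set z : \bar R | exists (delta : R) E,
     valid_pair s delta E (x^-1)%R /\ z = ((Enorm E)%:R / delta)%:E].

Definition ball (R : realType) (k : nat) (G : groupType) (s : 'I_k -> G)
  (t : R) : G -> Prop :=
  fun g => exists w : seq (letter k), ((size w)%:R <= t)%R /\ eval_word s w = g.

Definition ball_nat (k : nat) (G : groupType) (s : 'I_k -> G)
  (l : nat) : G -> Prop :=
  fun g => exists w : seq (letter k), (size w <= l)%N /\ eval_word s w = g.

Definition local_embedding (G : groupType) (H : groupType) (A : G -> Prop)
  (psi : G -> H) : Prop :=
  (forall g h, A g -> A h -> psi g = psi h -> g = h) /\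
  (forall g h, A g -> A h -> A (g * h)%g -> psi (g * h)%g = (psi g * psi h)%g).

(* membership in a list, for types without decidable equality *)
Fixpoint in_seq (T : Type) (x : T) (A : seq T) : Prop :=
  if A is y :: A' then y = x \/ in_seq x A' else False.

Definition LEF (G : groupType) : Prop :=
  forall A : seq G, exists (D : finGroupType) (psi : G -> D),
    local_embedding (fun g => in_seq g A) psi.

Definition LE_order (R : realType) (k : nat) (G : groupType) (s : 'I_k -> G)
  (t : R) (n : nat) : Prop :=
  exists (D : finGroupType) (psi : G -> D),
    #|D| = n /\ local_embedding (ball s t) psi.

Definition RF_order (k : nat) (G : groupType) (s : 'I_k -> G)
  (l : nat) (n : nat) : Prop :=
  exists (D : finGroupType) (f : G -> D),
    #|D| = n /\ is_hom f /\
    (forall g h, ball_nat s l g -> ball_nat s l h -> f g = f h -> g = h).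

Definition is_LEF_growth (R : realType) (k : nat) (G : groupType)
  (s : 'I_k -> G) (t : R) (n : nat) : Prop :=
  LE_order s t n /\ forall m, LE_order s t m -> (n <= m)%N.

Definition is_RF_growth (k : nat) (G : groupType) (s : 'I_k -> G)
  (l : nat) (n : nat) : Prop :=
  RF_order s l n /\ forall m, RF_order s l m -> (n <= m)%N.

(* Main.v *)
Require Import Defs.
From HB Require Import structures.
From mathcomp Require Import all_boot all_order all_algebra all_fingroup.
From mathcomp Require Import all_classical all_reals all_analysis.
From mathcomp Require Import lra.

Import Order.TTheory GRing.Theory Num.Theory.
Set Implicit Arguments. Unset Strict Implicit.
Lemma hom1 (G H : groupType) (f : G -> H) : is_hom f -> f 1%g = 1%g.
Proof.
move=> hf; apply: (@mulgI _ (f 1%g)); by rewrite -hf !mulg1.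
Qed.

Lemma homV (G H : groupType) (f : G -> H) g : is_hom f -> f (g^-1)%g = (f g)^-1%g.
Proof.
move=> hf; apply: (@mulIg _ (f g)); by rewrite -hf mulVg mulVg hom1.
Qed.

Lemma eval_hom (k : nat) (G H : groupType) (s : 'I_k -> G) (f : G -> H) w :
  is_hom f -> eval_word (fun i => f (s i)) w = f (eval_word s w).
Proof.
move=> hf; elim: w => [|[i b] w IH] /=; first by rewrite hom1.
by rewrite IH hf; case: b => //; rewrite homV.
Qed.

Definition Rm (D : finGroupType) (c : D) : {perm D} := perm (@mulIg D c).

Lemma Rm_hom (D : finGroupType) : is_hom (@Rm D).
Proof. by move=> x y; apply/permP => d; rewrite permM !permE mulgA. Qed.

Definition dis (Om : finType) (p q : {perm Om}) : nat := #|[set w | p w != q w]|.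

Lemma dis_sym (Om : finType) (p q : {perm Om}) : dis p q = dis q p.
Proof. by rewrite /dis; apply: eq_card => w; rewrite !inE eq_sym. Qed.

Lemma dis_tri (Om : finType) (p q r : {perm Om}) : (dis p r <= dis p q + dis q r)%N.
Proof.
rewrite /dis; apply: leq_trans (leq_card_setU [set w | p w != q w] [set w | q w != r w]).
apply: subset_leq_card; apply/fintype.subsetP => w; rewrite !inE.
by case: (p w =P q w) => //= ->.
Qed.

Lemma dis_mulr (Om : finType) (p q r : {perm Om}) : dis (p * r) (q * r) = dis p q.
Proof. by rewrite /dis; apply: eq_card => w; rewrite !inE !permM (inj_eq perm_inj). Qed.

Lemma dis_mull (Om : finType) (p q r : {perm Om}) : dis (r * p) (r * q) = dis p q.
Proof.
rewrite /dis -(card_preimset [set w | p w != q w] (@perm_inj _ r)).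
apply: eq_card => w; by rewrite !inE !permM.
Qed.

Lemma dis_inv (Om : finType) (p q : {perm Om}) : dis p^-1 q^-1 = dis p q.
Proof.
rewrite -(dis_mull p^-1 q^-1 p) mulgV -(dis_mulr 1 (p * q^-1) q) mul1g -mulgA mulVg mulg1.
by rewrite dis_sym.
Qed.

Lemma dis_mul (Om : finType) (p1 p2 q1 q2 : {perm Om}) :
  (dis (p1 * p2) (q1 * q2) <= dis p1 q1 + dis p2 q2)%N.
Proof.
apply: leq_trans (dis_tri (p1 * p2) (q1 * p2) (q1 * q2)) _.
by rewrite dis_mulr dis_mull.
Qed.

Lemma dis_eval (k : nat) (Om : finType) (r1 r2 : 'I_k -> {perm Om}) (m : nat) w :
  (forall i, dis (r1 i) (r2 i) <= m)%N ->
  (dis (eval_word r1 w) (eval_word r2 w) <= size w * m)%N.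
Proof.
move=> hm; elim: w => [|[i b] w IH] /=.
  by rewrite /dis leqn0 cards_eq0; apply/eqP/setP => x; rewrite !inE eqxx.
apply: leq_trans (dis_mul _ _ _ _) _.
rewrite mulSn leq_add //; case: b => //=; by rewrite ?dis_inv.
Qed.

Lemma dis_Rm (D : finGroupType) (a b : D) : a != b -> dis (Rm a) (Rm b) = #|D|.
Proof.
move=> ab; rewrite /dis -cardsT; apply: eq_card => d.
by rewrite !inE !permE (inj_eq (@mulgI _ d)).
Qed.

Lemma card_permT (D : finType) : #|{perm D}| = (#|D|)`!.
Proof.
rewrite -cardsT -card_perm; apply: eq_card => p.
rewrite /perm_on /= [RHS]unfold_in /=.
have -> : (p \in {perm D}) = true by [].
by symmetry; apply/fintype.subsetP => x _; rewrite finset.in_setT.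
Qed.

Lemma le_emb1 (G D : groupType) (A : G -> Prop) (psi : G -> D) :
  local_embedding A psi -> A 1%g -> psi 1%g = 1%g.
Proof.
move=> [_ hm] A1; apply: (@mulgI _ (psi 1%g)).
by rewrite -hm ?mulg1.
Qed.

Lemma psi_eval (R : realType) (k : nat) (G : groupType) (s : 'I_k -> G)
  (D : finGroupType) (psi : G -> D) (t : R) w :
  local_embedding (Defs.ball s t) psi -> (1 <= t)%R -> ((size w)%:R <= t)%R ->
  eval_word (fun i => psi (s i)) w = psi (eval_word s w).
Proof.
move=> le t1; have [_ hm] := le.
have inB : forall w', ((size w')%:R <= t)%R -> Defs.ball s t (eval_word s w').
  by move=> w' hw'; exists w'.
have B1 : Defs.ball s t 1%g by exists [::] => /=; split => //; apply: le_trans t1.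
have p1 := le_emb1 le B1.
elim: w => [|[i b] w IH] /= hw; first by rewrite p1.
have hw' : ((size w)%:R <= t)%R.
  by apply: le_trans hw; rewrite ler_nat.
have hi : Defs.ball s t (s i) by exists [:: (i, false)]; rewrite /= mulg1.
have hiV : Defs.ball s t (s i)^-1%g by exists [:: (i, true)]; rewrite /= mulg1.
have hw1 : Defs.ball s t (eval_word s ((i, b) :: w)) by exists ((i, b) :: w).
rewrite IH // hm; [|by clear hw1; case: b|exact: inB|exact: hw1].
clear hw1; case: b => //; congr (_ * _)%g.
apply: (@mulIg _ (psi (s i))); rewrite mulVg -hm ?mulVg //.
Qed.

Lemma dis_evalR (R : realType) (k : nat) (Om : finType) (r1 r2 : 'I_k -> {perm Om}) (a : R) w :
  (forall i, (dis (r1 i) (r2 i))%:R <= a)%R ->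
  ((dis (eval_word r1 w) (eval_word r2 w))%:R <= (size w)%:R * a)%R.
Proof.
move=> hm; elim: w => [|[i b] w IH] /=.
  rewrite mul0r.
have -> : dis (1 : {perm Om}) 1 = 0%N.
  by apply/eqP; rewrite /dis cards_eq0; apply/eqP/setP => x; rewrite !inE eqxx.
by [].
apply: (@le_trans _ R (((dis (if b then (r1 i)^-1%g else r1 i) (if b then (r2 i)^-1%g else r2 i))%:R + (dis (eval_word r1 w) (eval_word r2 w))%:R : R)%R)).
  by rewrite -natrD ler_nat; apply: dis_mul.
rewrite -nat1r mulrDl mul1r lerD //; case: b => //=; by rewrite ?dis_inv.
Qed.

Lemma minP (P : nat -> Prop) n0 : P n0 ->
  exists n, (P n /\ forall m, P m -> (n <= m)%N) /\ (n <= n0)%N.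
Proof.
move=> h.
have ex : exists n, `[< P n >] by exists n0; apply/asboolP.
case: (ex_minnP ex) => n /asboolP Pn hmin.
exists n; split; last by apply: hmin; apply/asboolP.
by split => // m Pm; apply: hmin; apply/asboolP.
Qed.

Unset Implicit Arguments. Set Strict Implicit.
Lemma size_le_Enorm (k : nat) (E : seq (seq (letter k))) r :
  r \in E -> (size r <= Enorm E)%N.
Proof.
elim: E => //= r' E IH; rewrite inE => /orP [/eqP ->|/IH h].
  by rewrite /Enorm /= /word_len leq_addr.
by apply: leq_trans h _; rewrite /Enorm /= leq_addl.
Qed.

Lemma hdist_dis (R : realType) (Om : finType) (p q : {perm Om}) :
  hdist p q = ((dis p q)%:R / #|Om|%:R :> R)%R.
Proof. by []. Qed.

Lemma dis_refl (Om : finType) (p : {perm Om}) : dis p p = 0%N.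
Proof. by apply/eqP; rewrite /dis cards_eq0; apply/eqP/setP => x; rewrite !inE eqxx. Qed.

Theorem corollary2p15 (R : realType) (k : nat) (G : groupType)
  (s : 'I_k -> G) (C : R) :
  epi_from_free s ->
  stable R s ->
  LEF G ->
  (1 <= C)%R ->
  (forall x : R, (1 <= x)%R -> (stab_fun s x <= (C * powR x C)%:E)%E) ->
  exists C' : R, (0 < C')%R /\
    forall l : nat, (0 < l)%N ->
      forall nL : nat, is_LEF_growth s (C' * powR (l%:R) C)%R nL ->
        exists nR : nat, is_RF_growth s l nR /\ (nR <= nL`!)%N.
Proof.
move=> _ _ _ C1 hF.
have C0 : (0 < C)%R by apply: lt_le_trans C1.
have P3 := powR_ge0 3 C.
exists (C * powR 3 C + 2)%R; split; first by nra.
move=> l l0 nL [[D [psi [cardD le]]] _].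
set t := ((C * powR 3 C + 2) * powR l%:R C)%R.
set L : R := (l%:R)%R.
have L1 : (1 <= L)%R by rewrite /L ler1n.
have LC : (L <= powR L C)%R by apply: le1r_powR.
set x : R := ((2 * l + 1)%N%:R)%R.
have xL : x = (2 * L + 1)%R by rewrite /x /L natrD natrM.
have x1 : (1 <= x)%R by rewrite xL; lra.
have hx3 : (powR x C <= powR 3 C * powR L C)%R.
  rewrite -powRM; [|lra|lra].
  apply: ge0_ler_powR; [lra| | |]; rewrite ?nnegrE; lra.
have := hF x x1 => hinf.
have : (stab_fun s x < (C * powR x C + 1)%:E)%E.
  by apply: le_lt_trans hinf _; rewrite lte_fin; lra.
case/ereal_inf_lt => _ [delta [E [vp ->]]]; rewrite lte_fin => hlt.
case: vp => d0 d1 uE kerE stabE.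
have hEn : ((Enorm E)%:R <= t)%R.
  have E0 : (0 <= (Enorm E)%:R :> R)%R by [].
  have : ((Enorm E)%:R <= (Enorm E)%:R / delta :> R)%R.
    by rewrite ler_pdivlMr // -[X in (_ <= X)%R]mulr1 ler_wpM2l.
  have : (C * powR x C <= C * (powR 3 C * powR L C))%R by rewrite ler_wpM2l //; lra.
  rewrite /t; nra.
have PL0 : (0 <= C * powR 3 C * powR L C)%R by apply: mulr_ge0; [apply: mulr_ge0; lra|apply: powR_ge0].
have hLt : (L <= t)%R by rewrite /t; lra.
have t1 : (1 <= t)%R by lra.
have B1 : Defs.ball s t 1%g by exists [::] => /=; split => //; lra.
have psi1 := le_emb1 le B1.
set rho := fun i => Rm (psi (s i)).
have hrho : forall w, ((size w)%:R <= t)%R -> eval_word rho w = Rm (psi (eval_word s w)).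
  move=> w hw; rewrite -(psi_eval (w:=w) le t1 hw).
  exact: (eval_hom (fun i => psi (s i)) w (@Rm_hom D)).
have hE : forall r, r \in E -> (hdist (eval_word rho r) 1%g < delta)%R.
  move=> r rE; have [_ ev1] := kerE r rE.
  rewrite hrho; last by apply: le_trans hEn; rewrite ler_nat size_le_Enorm.
  by rewrite ev1 psi1 (hom1 (@Rm_hom D)) hdist_dis dis_refl mul0r.
have [phi [hphi close]] := stabE D rho hE.
set N : R := (#|D|%:R)%R.
have N0 : (0 < N)%R by rewrite /N ltr0n; apply/card_gt0P; exists 1%g.
have closeD : forall i, ((dis (rho i) (phi (s i)))%:R <= N / x)%R.
  move=> i; move: (close i); rewrite hdist_dis ltr_pdivrMr // => h.
  rewrite ler_pdivlMr; last lra.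
  move: h; set d := ((dis _ _)%:R)%R; move=> h.
  have : (d * x < x^-1 * N * x)%R by rewrite ltr_pM2r //; lra.
  have x0 : (x != 0)%R by rewrite gt_eqF //; lra.
  by rewrite mulrAC mulVf // mul1r; lra.
have inj : forall g h, ball_nat s l g -> ball_nat s l h -> phi g = phi h -> g = h.
  move=> g h [w1 [hw1 <-]] [w2 [hw2 <-]] eqp.
  have [//|ne] := pselect (eval_word s w1 = eval_word s w2).
  exfalso.
  have hw1t : ((size w1)%:R <= t)%R by apply: le_trans hLt; rewrite ler_nat.
  have hw2t : ((size w2)%:R <= t)%R by apply: le_trans hLt; rewrite ler_nat.
  have hw1L : ((size w1)%:R <= L)%R by rewrite ler_nat.
  have hw2L : ((size w2)%:R <= L)%R by rewrite ler_nat.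
  have psne : psi (eval_word s w1) != psi (eval_word s w2).
    apply/eqP => e; apply: ne; apply: le.1 e; by [exists w1; split | exists w2; split].
  have d := dis_Rm psne.
  rewrite -!hrho // in d.
  have e1 := eval_hom s w1 hphi.
  have e2 := eval_hom s w2 hphi.
  have tr := dis_tri (eval_word rho w1) (eval_word (fun i => phi (s i)) w1) (eval_word rho w2).
  rewrite d e1 eqp -e2 (dis_sym _ (eval_word rho w2)) in tr.
  have b1 := dis_evalR w1 closeD.
  rewrite e1 eqp -e2 in b1.
  have b2 := dis_evalR w2 closeD.
  have y0 : (0 < N / x)%R by apply: divr_gt0; lra.
  have Nx : (N = N / x * x)%R.
    have x0 : (x != 0)%R by rewrite gt_eqF //; lra.
    by rewrite divfK.
  move: tr; rewrite -(ler_nat R) natrD -/N => tr.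
  set y := (N / x)%R in y0 Nx b1 b2.
  nra.
have RF : RF_order s l #|{perm D}|.
  by exists {perm D}, phi.
have [nR [[hR hmin] hle]] := minP RF.
exists nR; split => //.
by rewrite -cardD -card_permT.
Qed.
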